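(* Let $Q$ be a connected natural join query over binary relations $R_1,\dots,R_\ell$, and let $J$ be a database instance together with a designation, for each relation $R_i$, of one of its two attributes as its light attribute. Run the join-ordering procedure described in the context on $(Q,J)$, resolving every nondeterministic choice arbitrarily. Then the procedure terminates. At termination the collection $\mathcal{C}$ contains exactly one component $(c,T_c)$, and $T_c=Q(J)$, i.e. $T_c$ is the natural join of all relations $R_1^J,\dots,R_\ell^J$.
   Context: A natural join query over binary relations consists of relation symbols $R_1,\dots,R_\ell$, each having exactly two distinct attributes. The answer $Q(J)$ on an instance $J$ is the natural join of all $R_i^J$. Relations are sets of tuples, so there are no duplicates. The query graph has one vertex per attribute and one edge $\{A,B\}$ per relation $R(A,B)$. $Q$ is connected if its query graph is connected. Join-ordering procedure. It maintains a collection $\mathcal{C}$ of components $(c,T_c)$, where $c$ is a set of attributes and $T_c$ is a relation over attribute set $c$. Initially $\mathcal{C}=\emptyset$ and every relation is marked unused. Outer loop: while there exist an attribute $X$ that lies in no component's attribute set and an unused relation $R$ whose light attribute is $X$, do the following four steps. (i) Let $Y$ be the other attribute of $R$. Set $c:=\{X,Y\}$ and $T_c:=R^J$, and mark $R$ used. (ii) While there is an unused relation $R'$ whose light attribute lies in $c$: set $T_c:=T_c\bowtie R'^J$, set $c:=c\cup\operatorname{attr}(R')$, and mark $R'$ used. Such a join is called a light join. (iii) While there is a component $(c',T_{c'})\in\mathcal{C}$ with $c\cap c'\neq\emptyset$: set $T_c:=T_c\bowtie T_{c'}$, set $c:=c\cup c'$, and remove $(c',T_{c'})$ from $\mathcal{C}$.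 (iv) Add $(c,T_c)$ to $\mathcal{C}$. When the outer loop ends, the procedure outputs $T_c$ for the component in $\mathcal{C}$. *)

(* Defs.v *)
From mathcomp Require Import all_boot.
From Stdlib Require List.
Set Implicit Arguments. Unset Strict Implicit. Unset Printing Implicit Defensive.

Section JoinOrdering.
(* A : attributes, V : data values, l : number of relation symbols R_1..R_l.
   att i = (first attribute, second attribute) of R_i.
   lightfst i = true iff the first attribute of R_i is its light attribute.
   J i x y <-> the tuple (first := x, second := y) is in R_i^J. *)
Variables (A : finType) (V : Type) (l : nat).
Variables (att : 'I_l -> A * A) (lightfst : 'I_l -> bool) (J : 'I_l -> V -> V -> Prop).

(* A tuple is a partial assignment of values to attributes; its attribute
   set is the set of attributes where it is defined. *)
Definition tuple := A -> option V.
Definition relation := tuple -> Prop.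

Definition over (c : {set A}) (t : tuple) : Prop :=
  forall x, isSome (t x) = (x \in c).

Definition restr (c : {set A}) (t : tuple) : tuple :=
  fun x => if x \in c then t x else None.

Definition njoin (c1 : {set A}) (T1 : relation) (c2 : {set A}) (T2 : relation)
  : relation :=
  fun t => over (c1 :|: c2) t /\ T1 (restr c1 t) /\ T2 (restr c2 t).

Definition attrset (i : 'I_l) : {set A} := [set (att i).1; (att i).2].
Definition light (i : 'I_l) : A := if lightfst i then (att i).1 else (att i).2.

Definition relOf (i : 'I_l) : relation :=
  fun t => over (attrset i) t /\
    exists x y, t (att i).1 = Some x /\ t (att i).2 = Some y /\ J i x y.

Definition qattrs : {set A} := \bigcup_(i < l) attrset i.

Definition QJ : relation :=
  fun t => over qattrs t /\ forall i, relOf i (restr (attrset i) t).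

Definition qedge : rel A := fun x y =>
  [exists i, (((att i).1 == x) && ((att i).2 == y))
          || (((att i).1 == y) && ((att i).2 == x))].
Definition connected_query : Prop :=
  forall x y, x \in qattrs -> y \in qattrs -> connect qedge x y.

Record comp := Comp { cattr : {set A}; crel : relation }.

(* States of the procedure: Outer = at the test of the outer loop;
   Light = inside step (ii); Merge = inside step (iii). *)
Inductive state :=
| Outer of seq comp & {set 'I_l}
| Light of seq comp & {set 'I_l} & {set A} & relation
| Merge of seq comp & {set 'I_l} & {set A} & relation.

Implicit Types (C : seq comp) (u : {set 'I_l}) (c : {set A}) (T : relation) (p : comp) (i : 'I_l).
Inductive step : state -> state -> Prop :=
| st_start C u i :
    (forall p, List.In p C -> light i \notin cattr p) -> i \notin u ->
    step (Outer C u) (Light C (i |: u) (attrset i) (relOf i))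
| st_light C u c T i :
    i \notin u -> light i \in c ->
    step (Light C u c T)
         (Light C (i |: u) (c :|: attrset i) (njoin c T (attrset i) (relOf i)))
| st_light_done C u c T :
    (forall i, i \notin u -> light i \notin c) ->
    step (Light C u c T) (Merge C u c T)
| st_merge C1 C2 p u c T :
    c :&: cattr p != set0 ->
    step (Merge (C1 ++ p :: C2) u c T)
         (Merge (C1 ++ C2) u (c :|: cattr p) (njoin c T (cattr p) (crel p)))
| st_merge_done C u c T :
    (forall p, List.In p C -> c :&: cattr p = set0) ->
    step (Merge C u c T) (Outer (Comp c T :: C) u).

Definition init : state := Outer [::] set0.

Inductive reachable : state -> Prop :=
| reach_init : reachable init
| reach_step s s' : reachable s -> step s s' -> reachable s'.

End JoinOrdering.

(* Main.v *)
From Stdlib Require List FunctionalExtensionality Wf_nat.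
Require Import Defs.
From mathcomp Require Import all_boot.
From mathcomp Require Import zify.
Set Implicit Arguments. Unset Strict Implicit. Unset Printing Implicit Defensive.

Section Proofs.
Variables (A : finType) (V : Type) (l : nat).
Variables (att : 'I_l -> A * A) (lightfst : 'I_l -> bool) (J : 'I_l -> V -> V -> Prop).

Local Notation step := (step att lightfst J).
Local Notation attrset := (attrset att).
Local Notation relOf := (relOf att J).
Local Notation light := (light att lightfst).

Lemma restr_restr (c c' : {set A}) (t : Defs.tuple A V) :
  c' \subset c -> restr c' (restr c t) = restr c' t.
Proof.
move=> H; apply: FunctionalExtensionality.functional_extensionality => x; rewrite /restr.
by case: ifP => // h; rewrite (subsetP H _ h).
Qed.

Lemma over_restr (c1 c2 : {set A}) (t : Defs.tuple A V) :
  Defs.over (c1 :|: c2) t -> Defs.over c1 (restr c1 t).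
Proof.
move=> H x; rewrite /restr; case: ifP => h //.
by rewrite (H x) in_setU h.
Qed.

Lemma restr_over (c : {set A}) (t : Defs.tuple A V) : Defs.over c t -> restr c t = t.
Proof.
move=> H; apply: FunctionalExtensionality.functional_extensionality => x; rewrite /restr.
case: ifP => // h; have := H x; rewrite h; by case: (t x).
Qed.

Definition entc (c : {set A}) (T : relation A V) i :=
  attrset i \subset c /\ forall t, T t -> relOf i (restr (attrset i) t).

Definition Pc (c : {set A}) (T : relation A V) :=
  c \subset qattrs att /\ c != set0 /\ (forall t, T t -> Defs.over c t) /\
  (forall t, Defs.over c t -> (forall i, attrset i \subset c -> relOf i (restr (attrset i) t)) -> T t).

Lemma Pc_rel i : Pc (attrset i) (relOf i).
Proof.
split; first exact: (bigcup_sup i).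
split; first by apply/set0Pn; exists (att i).1; rewrite /Defs.attrset set21.
split; first by move=> t [].
move=> t ho hall; have := hall i (subxx _); by rewrite restr_over.
Qed.

Lemma ent_rel i : entc (attrset i) (relOf i) i.
Proof. split; first exact: subxx. move=> t [ho h]; rewrite restr_over //. Qed.

Lemma Pc_join c1 T1 c2 T2 : Pc c1 T1 -> Pc c2 T2 -> Pc (c1 :|: c2) (njoin c1 T1 c2 T2).
Proof.
move=> [s1 [n1 [so1 co1]]] [s2 [n2 [so2 co2]]].
split; first by rewrite subUset s1 s2.
split; first by case/set0Pn: n1 => x hx; apply/set0Pn; exists x; rewrite in_setU hx.
split; first by move=> t [].
move=> t ho hall; split => //; split.
- apply: co1; first exact: over_restr ho.
  move=> i hi; rewrite restr_restr //; apply: hall; apply: subset_trans hi (subsetUl _ _).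
- apply: co2; first by apply: (@over_restr c2 c1); rewrite setUC.
  move=> i hi; rewrite restr_restr //; apply: hall; apply: subset_trans hi (subsetUr _ _).
Qed.

Lemma ent_joinl c1 T1 c2 T2 i : entc c1 T1 i -> entc (c1 :|: c2) (njoin c1 T1 c2 T2) i.
Proof.
move=> [hs h]; split; first exact: subset_trans hs (subsetUl _ _).
move=> t [_ [h1 _]]; have := h _ h1; by rewrite restr_restr.
Qed.

Lemma ent_joinr c1 T1 c2 T2 i : entc c2 T2 i -> entc (c1 :|: c2) (njoin c1 T1 c2 T2) i.
Proof.
move=> [hs h]; split; first exact: subset_trans hs (subsetUr _ _).
move=> t [_ [_ h1]]; have := h _ h1; by rewrite restr_restr.
Qed.

Definition Good (C : seq (Defs.comp A V)) := forall p, List.In p C -> Pc (cattr p) (crel p).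
Definition drel := fun p q : Defs.comp A V => [disjoint cattr p & cattr q].
Definition Disj (C : seq (Defs.comp A V)) := pairwise drel C.
Definition Closed (C : seq (Defs.comp A V)) (u : {set 'I_l}) :=
  forall i, i \notin u -> forall p, List.In p C -> light i \notin cattr p.

Definition Inv (s : state A V l) : Prop :=
  match s with
  | Outer C u => Good C /\ Disj C /\ Closed C u /\
      forall i, i \in u -> exists p, List.In p C /\ entc (cattr p) (crel p) i
  | Light C u c T => Good C /\ Disj C /\ Closed C u /\ Pc c T /\
      forall i, i \in u -> (exists p, List.In p C /\ entc (cattr p) (crel p) i) \/ entc c T i
  | Merge C u c T => (Good C /\ Disj C /\ Closed C u /\ Pc c T /\
      forall i, i \in u -> (exists p, List.In p C /\ entc (cattr p) (crel p) i) \/ entc c T i)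
      /\ (forall i, i \notin u -> light i \notin c)
  end.

Lemma in_cat_mid (q p : Defs.comp A V) C1 C2 :
  List.In q (C1 ++ p :: C2) <-> q = p \/ List.In q (C1 ++ C2).
Proof.
elim: C1 => [|x C1 IH] /=; first by split; case; auto.
rewrite IH; split; [case; [auto|case; auto] | case; [auto|case; auto]].
Qed.

Lemma disj_mid p C1 C2 : Disj (C1 ++ p :: C2) -> Disj (C1 ++ C2).
Proof.
rewrite /Disj; elim: C1 => [|x C1 IH] /=; first by case/andP.
case/andP => ha hp; apply/andP; split; last exact: IH.
move: ha; rewrite !all_cat /= => /andP[-> /andP[_ ->]] //.
Qed.

Lemma allIn (a : pred (Defs.comp A V)) C : (forall p, List.In p C -> a p) -> all a C.
Proof. elim: C => //= x C IH h; rewrite h /=; auto. Qed.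

Lemma allIn_inv (a : pred (Defs.comp A V)) C p : all a C -> List.In p C -> a p.
Proof. elim: C => //= x C IH /andP[hx hC] [<-|h]; auto. Qed.

Lemma inv_step s s' : Inv s -> step s s' -> Inv s'.
Proof.
move=> hI hs; case: hs hI.
- move=> C u i hC hi [G [D [Cl Cv]]].
  split => //; split => //; split.
    by move=> j; rewrite in_setU1 negb_or => /andP[_ hj]; exact: Cl.
  split; first exact: Pc_rel.
  move=> j; rewrite in_setU1 => /orP[/eqP->|hj]; [right; exact: ent_rel | left; exact: Cv].
- move=> C u c T i hi hl [G [D [Cl [P Cv]]]].
  split => //; split => //; split.
    by move=> j; rewrite in_setU1 negb_or => /andP[_ hj]; exact: Cl.
  split; first exact: Pc_join P (Pc_rel i).
  move=> j; rewrite in_setU1 => /orP[/eqP->|hj]; first by right; apply: ent_joinr; exact: ent_rel.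
  case: (Cv j hj) => [h|h]; [by left | by right; apply: ent_joinl].
- move=> C u c T h hI; by split.
- move=> C1 C2 p u c T hne [[G [D [Cl [P Cv]]]] Cc].
  have hp : List.In p (C1 ++ p :: C2) by apply/in_cat_mid; left.
  split; last first.
    move=> j hj; rewrite in_setU negb_or (Cc j hj) /=; exact: Cl hj p hp.
  split; first by move=> q hq; exact: (G q (proj2 (in_cat_mid _ _ _ _) (or_intror hq))).
  split; first exact: disj_mid D.
  split; first by move=> j hj q hq; exact: (Cl j hj q (proj2 (in_cat_mid _ _ _ _) (or_intror hq))).
  split; first exact: Pc_join P (G p hp).
  move=> j hj; case: (Cv j hj) => [[q [hq he]]|h].
    case/in_cat_mid: hq => [eq|hq]; last by left; exists q.
    by subst q; right; apply: ent_joinr.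
  by right; apply: ent_joinl.
- move=> C u c T h [[G [D [Cl [P Cv]]]] Cc].
  split; first by move=> q /= [<-|hq] //; exact: G.
  split.
    rewrite /Disj /=; apply/andP; split => //; apply: allIn => q hq.
    by rewrite /drel /= -setI_eq0 h.
  split; first by move=> j hj q /= [<-|hq] /=; [exact: Cc | exact: Cl].
  move=> j hj; case: (Cv j hj) => [[q [hq he]]|he].
    by exists q; split => //; right.
  by exists (Comp c T); split => //; left.
Qed.

Lemma reach_inv s : reachable att lightfst J s -> Inv s.
Proof.
elim => [|s0 s1 _ IH hs]; last exact: inv_step IH hs.
split => //; split => //; split => //. by move=> i; rewrite in_set0.
Qed.

Definition cnt (s : state A V l) :=
  match s with Outer _ u | Light _ u _ _ | Merge _ u _ _ => l - #|u| end.

Lemma cnt_dec (i : 'I_l) (u : {set 'I_l}) : i \notin u -> l - #|i |: u| < l - #|u|.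
Proof.
move=> hi; have H : #|i |: u| <= l by rewrite -[X in _ <= X]card_ord; apply: max_card.
move: H; rewrite cardsU1 hi add1n; move: #|u| => k H; rewrite subnS; move: H; case: (l - k) (subn_gt0 k l) => [|m] /=; [move=> <- //| by []].
Qed.

Lemma acc_all n : forall s, cnt s < n -> Acc (fun s' s => step s s') s.
Proof.
elim: n => [//|n IH] s hs.
have hO : forall (C : seq (Defs.comp A V)) (u : {set 'I_l}), l - #|u| <= n -> Acc (fun s' s => step s s') (Outer C u).
  move=> C u hu; constructor => s' st; inversion st; subst.
  apply: IH => /=; match goal with H : is_true (_ \notin _) |- _ => have := cnt_dec H end; move=> h; exact: leq_trans h hu.
have hM : forall (C : seq (Defs.comp A V)) (u : {set 'I_l}) (c : {set A}) (T : relation A V), l - #|u| <= n -> Acc (fun s' s => step s s') (Merge C u c T).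
  move=> C; elim/(well_founded_induction (Wf_nat.well_founded_ltof _ (@size (Defs.comp A V)))): C.
  move=> C IHC u c T hu; constructor => s' st; inversion st; subst.
  + apply: IHC => //; rewrite /Wf_nat.ltof !size_cat /=; lia.
  + exact: hO.
case: s hs => [C u|C u c T|C u c T] /= hs.
- exact: hO.
- constructor => s' st; inversion st; subst.
  + apply: IH => /=; match goal with H : is_true (_ \notin _) |- _ => have := cnt_dec H end; move=> h; exact: leq_trans h hs.
  + exact: hM.
- exact: hM.
Qed.

Lemma split_or (c : {set A}) (C : seq (Defs.comp A V)) :
  (exists C1 p C2, C = C1 ++ p :: C2 /\ c :&: cattr p != set0) \/
  (forall p, List.In p C -> c :&: cattr p = set0).
Proof.
elim: C => [|x C IH]; first by right.
case: (eqVneq (c :&: cattr x) set0) => hx.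
  case: IH => [[C1 [p [C2 [-> h]]]]|h]; first by left; exists (x :: C1), p, C2.
  by right => q /= [<-|hq]; auto.
by left; exists [::], x, C.
Qed.

End Proofs.

Theorem mainTheorem1 (A : finType) (V : Type) (l : nat)
  (att : 'I_l -> A * A) (lightfst : 'I_l -> bool) (J : 'I_l -> V -> V -> Prop) :
  0 < l ->
  (forall i, (att i).1 != (att i).2) ->
  connected_query att ->
  (* termination: no infinite run, whatever the choices *)
  Acc (fun s' s => step att lightfst J s s') (init A V l) /\
  (* every run ends in a state with exactly one component whose relation is Q(J) *)
  (forall s, reachable att lightfst J s ->
     (forall s', ~ step att lightfst J s s') ->
     exists c T u, s = Outer [:: Comp c T] u /\
       (forall t, T t <-> QJ att J t)).
Proof.
move=> hl hneq hconn; split; first by apply: (@acc_all _ _ _ _ _ _ (l.+1)) => /=; lia.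
move=> s hr hterm; have hI := reach_inv hr.
case: s hr hterm hI => [C u|C u c T|C u c T] hr hterm hI; last first.
- exfalso; case: (split_or c C) => [[C1 [p [C2 [hC h]]]]|h].
    subst C; by apply: (hterm (Merge (C1 ++ C2) u (c :|: cattr p) (njoin c T (cattr p) (crel p)))); apply: st_merge.
  by apply: (hterm (Outer (Comp c T :: C) u)); apply: st_merge_done.
- exfalso; case: (boolP [exists i, (i \notin u) && (light att lightfst i \in c)]).
    case/existsP => i /andP[h1 h2].
    by apply: (hterm (Light C (i |: u) (c :|: attrset att i) (njoin c T (attrset att i) (relOf att J i)))); apply: st_light.
  move/existsPn => h; apply: (hterm (Merge C u c T)); apply: st_light_done => i hi.
  by have := h i; rewrite hi.
case: hI => [G [D [Cl Cv]]].
have hall : forall i, i \in u.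
  move=> i; case: (boolP (i \in u)) => // hi; exfalso.
  apply: (hterm (Light C (i |: u) (attrset att i) (relOf att J i))); apply: st_start => //.
  by move=> p hp; exact: Cl hi p hp.
have [p [hp _]] := Cv (Ordinal hl) (hall _).
case: C G D Cl Cv hp hr hterm => [|p0 C'] G D Cl Cv hp0 hr hterm; first by [].
have Pp := G p0 (or_introl erefl).
have Dp : all (drel (A:=A) (V:=V) p0) C' by case/andP: D.
have clo : forall z w, qedge att z w -> z \in cattr p0 -> w \in cattr p0.
  move=> z w /existsP[i hi] hz.
  have [hzi hwi] : z \in attrset att i /\ w \in attrset att i.
    by case/orP: hi => /andP[/eqP <- /eqP <-]; rewrite /Defs.attrset set21 set22.
  have [r [hr' [hsub _]]] := Cv i (hall i).
  have hz' := subsetP hsub _ hzi; have hw' := subsetP hsub _ hwi.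
  case: hr' => [er|hr']; first by subst r.
  by have := disjointFr (allIn_inv Dp hr') hz; rewrite hz'.
destruct C' as [|q C''].
  exists (cattr p0), (crel p0), u; split; first by case: p0 {G D Cl Cv hp0 hr hterm Pp Dp clo}.
  have eq : cattr p0 = qattrs att.
    apply/eqP; rewrite eqEsubset; case: Pp => -> _ /=.
    apply/bigcupsP => i _; have [r [[<-|//] [hs _]]] := Cv i (hall i); exact: hs.
  move=> t; split.
    move=> ht; split; first by rewrite -eq; case: Pp => _ [_ [so _]]; exact: so.
    move=> i; have [r [[<-|//] [_ he]]] := Cv i (hall i); exact: he.
  case=> ho hrel; case: Pp => _ [_ [_ co]]; apply: co; first by rewrite eq.
  by move=> i _; apply: hrel.
exfalso.
have Pq := G q (or_intror (or_introl erefl)).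
case: Pp => sp [np _]; case: Pq => sq [nq _].
case/set0Pn: np => x hx; case/set0Pn: nq => y hy.
have := hconn x y (subsetP sp _ hx) (subsetP sq _ hy).
case/connectP => s hpath hlast.
have key : forall s x, path (qedge att) x s -> x \in cattr p0 -> last x s \in cattr p0.
  elim => //= w s' IH x' /andP[he hp'] hx'; exact: IH _ hp' (clo _ _ he hx').
have := key _ _ hpath hx; rewrite -hlast => hy'.
have := disjointFr (allIn_inv Dp (or_introl erefl)) hy'; by rewrite hy.
Qed.
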